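(* Let $n \ge 1$ and let $X = [q_{ij}] \in \{0,1\}^{n\times n}$ be any infeasible solution, i.e. a binary $n\times n$ matrix in which at least one row sum or column sum differs from $1$. Run the Bit-Flip Heuristic Algorithm (BFHA), described in the context, on input $X$, with ties broken arbitrarily. Then the algorithm terminates, and its output is a feasible solution, i.e. a binary $n\times n$ matrix all of whose row sums and column sums equal $1$ (a permutation matrix).
   Context: A solution of the assignment/QAP constraints is a binary matrix $X=[q_{ij}]\in\{0,1\}^{n\times n}$. It is feasible if $\sum_{j=1}^n q_{ij}=1$ for every $i$ and $\sum_{i=1}^n q_{ij}=1$ for every $j$ (one-hot constraints on all rows and columns). Otherwise it is infeasible. For the current matrix $X$ define the violation matrix $V=[v_{ij}]$ by $v_{ij}=\sum_{l=1}^{n} q_{il}+\sum_{k=1}^{n} q_{kj}-2$. Then $X$ is feasible if and only if $V=0$. The Bit-Flip Heuristic Algorithm (BFHA) takes $X$ as input and, as long as $V\neq 0$, repeats the following step and then recomputes $V$ for the updated $X$: (i) If some entry of $V$ is $\ge 1$, choose a position $(i,j)$ with $q_{ij}=1$ whose value $v_{ij}$ is largest among all positions with $q_{ij}=1$, and set $q_{ij}:=0$. (ii) Otherwise, if some entry of $V$ is $\le -1$, choose a position $(i,j)$ with $q_{ij}=0$ whose value $v_{ij}$ is smallest among all positions with $q_{ij}=0$, and set $q_{ij}:=1$. When $V=0$ the algorithm stops and outputs the current $X$. *)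

(* Defs.v *)
From mathcomp Require Import all_boot all_order all_algebra.
From Stdlib Require Import Relations.
Set Implicit Arguments. Unset Strict Implicit. Unset Printing Implicit Defensive.
Import Order.TTheory GRing.Theory Num.Theory.

Definition rowsum n (X : 'M[bool]_n) (i : 'I_n) : nat := \sum_(l < n) nat_of_bool (X i l).
Definition colsum n (X : 'M[bool]_n) (j : 'I_n) : nat := \sum_(k < n) nat_of_bool (X k j).

Definition feasible n (X : 'M[bool]_n) : Prop :=
  (forall i, rowsum X i = 1%N) /\ (forall j, colsum X j = 1%N).

Definition viol n (X : 'M[bool]_n) (i j : 'I_n) : int :=
  ((rowsum X i + colsum X j)%N%:Z - 2)%R.

Definition V_zero n (X : 'M[bool]_n) : Prop := forall i j, viol X i j = 0%R.

Definition set_entry n (X : 'M[bool]_n) (i j : 'I_n) (b : bool) : 'M[bool]_n :=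
  \matrix_(k, l) (if (k == i) && (l == j) then b else X k l).

(* One step of BFHA (nondeterministic: any admissible tie-breaking choice). *)
Definition bfha_step n (X Y : 'M[bool]_n) : Prop :=
  ~ V_zero X /\
  ( ( (exists i j, (1 <= viol X i j)%R) /\
      exists i j, X i j = true /\
        (forall k l, X k l = true -> (viol X k l <= viol X i j)%R) /\
        Y = set_entry X i j false )
  \/
    ( (forall i j, ~ (1 <= viol X i j)%R) /\
      (exists i j, (viol X i j <= -1)%R) /\
      exists i j, X i j = false /\
        (forall k l, X k l = false -> (viol X i j <= viol X k l)%R) /\
        Y = set_entry X i j true ) ).

(* Main.v *)
Require Import Defs.
From mathcomp Require Import all_boot all_order all_algebra.
From Stdlib Require Import Relations.
From mathcomp Require Import zify.
Set Implicit Arguments. Unset Strict Implicit. Unset Printing Implicit Defensive.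

Section Aux.
Variable n : nat.
Implicit Types (X Y Z : 'M[bool]_n).

Lemma sum_bool_pos (F : 'I_n -> bool) :
  (0 < \sum_(l < n) nat_of_bool (F l))%N -> exists l, F l.
Proof.
move=> H; case: (pickP F) => [l Fl|H0]; first by exists l.
by move: H; rewrite big1 // => l _; rewrite H0.
Qed.

Lemma sum_bool_ge (F : 'I_n -> bool) l : F l -> (1 <= \sum_(l < n) nat_of_bool (F l))%N.
Proof. by move=> Fl; rewrite (bigD1 l) //= Fl. Qed.

Lemma sum_le1_lt (f : 'I_n -> nat) i0 :
  (forall i, f i <= 1)%N -> f i0 = 0%N -> (\sum_i f i < n)%N.
Proof.
move=> H1 H0.
have E : \sum_(i < n) 1%N = n by rewrite sum_nat_const card_ord muln1.
rewrite -[X in (_ < X)%N]E.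
rewrite (bigD1 i0) //= [X in (_ < X)%N](bigD1 i0) //= H0 add0n add1n ltnS.
by apply: leq_sum => i _.
Qed.

Lemma sum_ge1 (f : 'I_n -> nat) : (forall i, 1 <= f i)%N -> (n <= \sum_i f i)%N.
Proof.
move=> H; have E : \sum_(i < n) 1%N = n by rewrite sum_nat_const card_ord muln1.
by rewrite -[X in (X <= _)%N]E; apply: leq_sum.
Qed.

Definition ones X : nat := \sum_(p : 'I_n * 'I_n) nat_of_bool (X p.1 p.2).

Lemma ones_row X : ones X = \sum_i rowsum X i.
Proof. by rewrite /ones /rowsum pair_big. Qed.

Lemma ones_col X : ones X = \sum_j colsum X j.
Proof. by rewrite /ones /colsum exchange_big pair_big /=. Qed.

Lemma ones_le X : (ones X <= n * n)%N.
Proof.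
have E : \sum_(p : 'I_n * 'I_n) 1%N = (n * n)%N by rewrite sum1_card card_prod card_ord.
rewrite /ones -E; by apply: leq_sum => p _; case: (X _ _).
Qed.

Lemma ones_set X i j b : (ones (set_entry X i j b) + X i j = ones X + b)%N.
Proof.
rewrite /ones (bigD1 (i, j)) //= [X in (_ = X + _)%N](bigD1 (i, j)) //= mxE !eqxx /=.
have -> : \sum_(p | p != (i, j)) nat_of_bool (set_entry X i j b p.1 p.2)
        = \sum_(p | p != (i, j)) nat_of_bool (X p.1 p.2).
  apply: eq_bigr => [[k l]] /= H; rewrite mxE.
  by move: H; rewrite xpair_eqE => /negbTE ->.
by rewrite [RHS]addnC [X i j + _]addnC [RHS]addnA.
Qed.

Lemma rowsum_set X i j b k : (rowsum (set_entry X i j b) k <= rowsum X k + (k == i))%N.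
Proof.
rewrite /rowsum; case: (eqVneq k i) => [->|nki] /=.
  rewrite (bigD1 j) //= [X in (_ <= X + _)%N](bigD1 j) //= mxE !eqxx /=.
  have -> : \sum_(l | l != j) nat_of_bool (set_entry X i j b i l)
        = \sum_(l | l != j) nat_of_bool (X i l).
    by apply: eq_bigr => l /negbTE H; rewrite mxE eqxx H.
  case: b; case: (X i j) => /=; lia.
rewrite addn0 (eq_bigr (fun l => nat_of_bool (X k l))) // => l _.
by rewrite mxE (negbTE nki).
Qed.

Lemma colsum_set X i j b k : (colsum (set_entry X i j b) k <= colsum X k + (k == j))%N.
Proof.
rewrite /colsum; case: (eqVneq k j) => [->|nkj] /=.
  rewrite (bigD1 i) //= [X in (_ <= X + _)%N](bigD1 i) //= mxE !eqxx /=.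
  have -> : \sum_(l | l != i) nat_of_bool (set_entry X i j b l j)
        = \sum_(l | l != i) nat_of_bool (X l j).
    by apply: eq_bigr => l /negbTE H; rewrite mxE eqxx H.
  case: b; case: (X i j) => /=; lia.
rewrite addn0 (eq_bigr (fun l => nat_of_bool (X l k))) // => l _.
by rewrite mxE (negbTE nkj) andbF.
Qed.

Definition pp X : bool := [forall i, rowsum X i <= 1]%N && [forall j, colsum X j <= 1]%N.

Lemma ppP X : reflect ((forall i, rowsum X i <= 1)%N /\ (forall j, colsum X j <= 1)%N) (pp X).
Proof.
apply: (iffP andP) => [[/forallP H1 /forallP H2]|[H1 H2]]; split => //; by apply/forallP.
Qed.

Lemma pp_noviol X : pp X -> forall i j, ~ (1 <= viol X i j)%R.
Proof. move=> /ppP [H1 H2] i j; have := H1 i; have := H2 j; rewrite /viol; lia. Qed.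

Lemma noviol_pp X : (forall i j, ~ (1 <= viol X i j)%R) -> pp X.
Proof.
move=> H; apply/ppP; split.
  move=> i; case: (leqP (rowsum X i) 1) => // Hr.
  have [l Hl] : exists l, X i l by apply: sum_bool_pos; rewrite -/(rowsum X i); lia.
  have := @sum_bool_ge (fun k => X k l) i Hl; rewrite -/(colsum X l) => Hc.
  exfalso; apply: (H i l); rewrite /viol; lia.
move=> j; case: (leqP (colsum X j) 1) => // Hc.
have [l Hl] : exists l, X l j by apply: sum_bool_pos; rewrite -/(colsum X j); lia.
have := @sum_bool_ge (fun k => X l k) j Hl; rewrite -/(rowsum X l) => Hr.
exfalso; apply: (H l j); rewrite /viol; lia.
Qed.

Definition meas X : nat := if pp X then (n * n - ones X)%N else (n * n + 1 + ones X)%N.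

Lemma step_dec X Z : bfha_step X Z -> (meas Z < meas X)%N.
Proof.
move=> [_ [[[i0 [j0 Hv]] [i [j [Hij [_ ->]]]]] | [Hno [[i0 [j0 Hv]] [i [j [Hij [Hmin ->]]]]]]]].
  have npp : ~~ pp X by apply/negP => /pp_noviol /(_ i0 j0).
  have := ones_set X i j false; rewrite Hij /= addn0 => Ho.
  rewrite /meas (negbTE npp); case: (pp _); lia.
have ppX := noviol_pp Hno; move/ppP: (ppX) => [H1 H2].
have Hs : (rowsum X i0 + colsum X j0 <= 1)%N by move: Hv; rewrite /viol; lia.
have [r0 [c0 [Hr0 Hc0]]] : exists r0 c0, rowsum X r0 = 0%N /\ colsum X c0 = 0%N.
  have [Hr|Hc] : rowsum X i0 = 0%N \/ colsum X j0 = 0%N by lia.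
    exists i0; suff [c Hc] : exists c, colsum X c = 0%N by exists c.
    case: (pickP (fun c => colsum X c == 0%N)) => [c /eqP Hc|Hc]; first by exists c.
    have := sum_le1_lt H1 Hr; rewrite -ones_row ones_col.
    have : (n <= \sum_j colsum X j)%N by apply: sum_ge1 => jj; rewrite lt0n Hc.
    lia.
  suff [r Hr] : exists r, rowsum X r = 0%N by exists r, j0.
  case: (pickP (fun c => rowsum X c == 0%N)) => [c /eqP Hr|Hr]; first by exists c.
  have := sum_le1_lt H2 Hc; rewrite -ones_col ones_row.
  have : (n <= \sum_j rowsum X j)%N by apply: sum_ge1 => jj; rewrite lt0n Hr.
  lia.
have Hz : X r0 c0 = false.
  apply/negP => H; have := @sum_bool_ge (fun l => X r0 l) c0 H; rewrite -/(rowsum X r0); lia.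
have := Hmin _ _ Hz; rewrite /viol Hr0 Hc0 => Hle.
have Hri : rowsum X i = 0%N by lia.
have Hcj : colsum X j = 0%N by lia.
have ppZ : pp (set_entry X i j true).
  apply/ppP; split.
    move=> k; have := rowsum_set X i j true k; have := H1 k.
    case: (eqVneq k i) => [->|_]; rewrite ?Hri /=; lia.
  move=> k; have := colsum_set X i j true k; have := H2 k.
  case: (eqVneq k j) => [->|_]; rewrite ?Hcj /=; lia.
have := ones_set X i j true; rewrite Hij /= addn0 => Ho.
have := ones_le (set_entry X i j true).
rewrite /meas ppZ ppX; lia.
Qed.

Lemma acc_all X : Acc (fun Z Y => bfha_step Y Z) X.
Proof.
have : forall k X, (meas X < k)%N -> Acc (fun Z Y => bfha_step Y Z) X.
  elim => [//|k IH] Y HY; constructor => Z HZ; apply: IH.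
  have := step_dec HZ; lia.
by move=> /(_ (meas X).+1 X); apply.
Qed.

End Aux.

Lemma no_step_Vzero n (Y : 'M[bool]_n) : (forall Z, ~ bfha_step Y Z) -> V_zero Y.
Proof.
move=> Hns.
case: (boolP [forall i, forall j, viol Y i j == 0%R]) => [/forallP H|Hn].
  by move=> i j; apply/eqP; move/forallP: (H i).
have nV : ~ V_zero Y by move=> HV; move/negP: Hn; apply; apply/forallP => i; apply/forallP => j; rewrite HV.
exfalso.
case: (boolP [exists i, exists j, (1 <= viol Y i j)%R]) => [/existsP [i0 /existsP [j0 Hv]]|Hno].
  have [p0 Hp0] : exists p0 : 'I_n * 'I_n, Y p0.1 p0.2.
    have Hs : (3 <= rowsum Y i0 + colsum Y j0)%N by move: Hv; rewrite /viol; lia.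
    case: (leqP 2 (rowsum Y i0)) => Hr.
      have [l Hl] : exists l, Y i0 l by apply: sum_bool_pos; rewrite -/(rowsum Y i0); lia.
      by exists (i0, l).
    have [l Hl] : exists l, Y l j0 by apply: sum_bool_pos; rewrite -/(colsum Y j0); lia.
    by exists (l, j0).
  case: (@arg_maxnP _ p0 (fun p => Y p.1 p.2) (fun p => rowsum Y p.1 + colsum Y p.2)%N Hp0)
    => [[i j] /= Hij Hmax].
  apply: (Hns (set_entry Y i j false)); split => //; left; split; first by exists i0, j0.
  exists i, j; split => //; split => // k l Hkl.
  have := Hmax (k, l) Hkl; rewrite /viol /=; lia.
have Hno' : forall i j, ~ (1 <= viol Y i j)%R.
  by move=> i j H; move/negP: Hno; apply; apply/existsP; exists i; apply/existsP; exists j.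
have [i0 [j0 Hv]] : exists i j, (viol Y i j <= -1)%R.
  case: (pickP (fun p : 'I_n * 'I_n => viol Y p.1 p.2 != 0%R)) => [[i j] /= Hp|H0].
    exists i, j; have := Hno' i j; move: Hp; rewrite /viol; lia.
  by exfalso; apply: nV => i j; have := H0 (i, j); rewrite /= => /negbFE/eqP.
have Hz : ~~ Y i0 j0.
  apply/negP => H.
  have := @sum_bool_ge _ (fun l => Y i0 l) j0 H; rewrite -/(rowsum Y i0).
  have := @sum_bool_ge _ (fun k => Y k j0) i0 H; rewrite -/(colsum Y j0).
  move: Hv; rewrite /viol; lia.
case: (@arg_minnP _ (i0, j0) (fun p => ~~ Y p.1 p.2) (fun p => rowsum Y p.1 + colsum Y p.2)%N Hz)
  => [[i j] /= Hij Hmin].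
apply: (Hns (set_entry Y i j true)); split => //; right; split => //; split; first by exists i0, j0.
exists i, j; split; first by apply/negbTE.
split => // k l Hkl.
have := Hmin (k, l); rewrite /= Hkl => /(_ isT); rewrite /viol /=; lia.
Qed.

Lemma Vzero_feasible n (Y : 'M[bool]_n) : (1 <= n)%N -> V_zero Y -> feasible Y.
Proof.
move=> hn HV.
have H2 : forall i j, (rowsum Y i + colsum Y j = 2)%N.
  by move=> i j; have := HV i j; rewrite /viol; lia.
pose i0 : 'I_n := Ordinal hn.
have Er : \sum_i rowsum Y i = (n * rowsum Y i0)%N.
  rewrite (eq_bigr (fun _ => rowsum Y i0)) ?sum_nat_const ?card_ord // => i _.
  have := H2 i i0; have := H2 i0 i0; lia.
have Ec : \sum_i colsum Y i = (n * colsum Y i0)%N.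
  rewrite (eq_bigr (fun _ => colsum Y i0)) ?sum_nat_const ?card_ord // => i _.
  have := H2 i0 i; have := H2 i0 i0; lia.
have := ones_row Y; have := ones_col Y; rewrite Er Ec => A B.
have E : rowsum Y i0 = colsum Y i0.
  apply/eqP; rewrite -(eqn_pmul2l hn); apply/eqP; lia.
have := H2 i0 i0; rewrite E => Hc.
split => [i|j].
  have := H2 i i0; lia.
have := H2 i0 j; rewrite E; lia.
Qed.

Theorem theorem1 (n : nat) (hn : (1 <= n)%N) (X : 'M[bool]_n)
  (hX : ~ feasible X) :
  Acc (fun Z Y => bfha_step Y Z) X /\
  (forall Y, clos_refl_trans _ (@bfha_step n) X Y ->
     (forall Z, ~ bfha_step Y Z) -> V_zero Y /\ feasible Y).
Proof.
split; first exact: acc_all.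
move=> Y _ Hns; have HV := no_step_Vzero Hns; split => //.
exact: Vzero_feasible.
Qed.
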